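(* Let $r\ge 3$ and let $\mathcal H=(V,E)$ be an $r$-uniform bi-hypergraph such that $d(v)\le \frac{(r-1)^{r-1}\mathrm{e}^{-1}-2}{r}$ for every $v\in V$, where $\mathrm{e}$ is the base of the natural logarithm. Then $\mathcal H$ is colorable.
   Context: A bi-hypergraph $\mathcal H=(V,E)$ consists of a finite vertex set $V$ and a set $E$ of subsets of $V$, called edges, with no edge contained in another. It is $r$-uniform if every edge has exactly $r$ elements. The degree $d(v)$ of a vertex $v$ is the number of edges containing $v$. A mapping $f:V\to\mathbb N$ is a proper coloring of $\mathcal H$ if $1<|f(e)|<|e|$ for every $e\in E$, where $f(e)=\{f(v):v\in e\}$. $\mathcal H$ is colorable if it has a proper coloring. *)

(* Defs.v *)
From mathcomp Require Import all_boot.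
From Stdlib Require Import Reals.
Set Implicit Arguments. Unset Strict Implicit. Unset Printing Implicit Defensive.

Definition bihypergraph (V : finType) (E : {set {set V}}) : Prop :=
  forall e1 e2, e1 \in E -> e2 \in E -> e1 \subset e2 -> e1 = e2.

Definition uniform (V : finType) (E : {set {set V}}) (r : nat) : Prop :=
  forall e, e \in E -> #|e| = r.

Definition degree (V : finType) (E : {set {set V}}) (v : V) : nat :=
  #|[set e in E | v \in e]|.

Definition ncolors (V : finType) (f : V -> nat) (e : {set V}) : nat :=
  size (undup [seq f x | x <- enum e]).

Definition proper_coloring (V : finType) (E : {set {set V}}) (f : V -> nat) : Prop :=
  forall e, e \in E -> 1 < ncolors f e < #|e|.

Definition colorable (V : finType) (E : {set {set V}}) : Prop :=
  exists f : V -> nat, proper_coloring E f.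

(* Main.v *)
Require Import Defs.
From mathcomp Require Import all_boot.
From Stdlib Require Import Reals.
From Stdlib Require Import Lra.
From mathcomp Require Import zify.
Set Implicit Arguments. Unset Strict Implicit. Unset Printing Implicit Defensive.
Local Notation "m ^ n" := (expn m n) : nat_scope.

Lemma expn_pow (m n : nat) : expn m n = Nat.pow m n.
Proof. elim: n => [|n IH] //=. by rewrite expnS IH mulnE. Qed.

Lemma exp_pow_nat (x : R) (n : nat) : (exp x ^ n = exp (INR n * x))%R.
Proof.
elim: n => [|n IH]; first by rewrite /= Rmult_0_l exp_0.
rewrite [LHS]/=.
rewrite IH -exp_plus S_INR. f_equal. ring.
Qed.

Lemma key_real (D K : nat) : (1 <= D)%N -> (exp 1 * INR (D.+1) <= INR K)%R ->
  (expn D.+1 D.+1 <= K * expn D D)%N.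
Proof.
move=> HD HK.
have HD0 : (0 < INR D)%R by apply: lt_0_INR; apply/ltP.
have h1 : (1 + / INR D <= exp (/ INR D))%R.
  by apply: Rlt_le; apply: exp_ineq1; apply: Rgt_not_eq; apply: Rinv_0_lt_compat.
have h2 : ((1 + / INR D) ^ D <= exp 1)%R.
  have -> : exp 1 = (exp (/ INR D) ^ D)%R.
    by rewrite exp_pow_nat Rinv_r //; apply: Rgt_not_eq.
  apply: pow_incr; split => //. have := Rinv_0_lt_compat _ HD0. lra.
have h3 : (INR D.+1 ^ D <= exp 1 * INR D ^ D)%R.
  have -> : INR D.+1 = (INR D * (1 + / INR D))%R.
    rewrite S_INR Rmult_plus_distr_l Rinv_r; [ring | by apply: Rgt_not_eq].
  rewrite Rpow_mult_distr Rmult_comm. apply: Rmult_le_compat_r => //.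
  apply: pow_le; lra.
apply/leP; apply: INR_le.
rewrite mulnE expn_pow expn_pow mult_INR !pow_INR.
have -> : (INR D.+1 ^ D.+1 = INR D.+1 * INR D.+1 ^ D)%R by [].
have hp : (0 <= INR D ^ D)%R by apply: pow_le; lra.
have hq : (0 <= INR D.+1)%R by apply: pos_INR.
apply: Rle_trans (Rmult_le_compat_l _ _ _ hq h3) _.
rewrite -Rmult_assoc. apply: Rmult_le_compat_r => //. lra.
Qed.
Definition Good (O I : finType) (A : I -> {set O}) (S : {set I}) : {set O} :=
  [set w | [forall i in S, w \notin A i]].

Lemma Good0 (O I : finType) (A : I -> {set O}) : Good A set0 = setT.
Proof. by apply/setP=> w; rewrite !inE; apply/forallP=> i; rewrite inE. Qed.

Lemma GoodU1 (O I : finType) (A : I -> {set O}) x S :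
  Good A (x |: S) = Good A S :\: A x.
Proof.
apply/setP=> w; rewrite !inE; apply/forallP/andP.
  move=> H; split; first by have := H x; rewrite !inE eqxx.
  by apply/forallP=> i; apply/implyP=> iS; have := H i; rewrite !inE iS orbT.
case=> Hx /forallP H i; apply/implyP; rewrite !inE => /orP[/eqP->//|iS].
by have /implyP := H i; apply.
Qed.

Definition Claim (O I : finType) (A : I -> {set O}) (E : {set I}) (D n : nat) :=
  forall (S : {set I}) (i : I), #|S| < n -> S \subset E -> i \in E -> i \notin S ->
    #|A i :&: Good A S| * D.+1 <= #|Good A S|.

Lemma chain (O I : finType) (A : I -> {set O}) (E : {set I}) (D n : nat) :
  Claim A E D n -> forall t (B T : {set I}), #|T| = t -> B :|: T \subset E -> [disjoint B & T] ->
  #|B| + #|T| <= n -> #|Good A B| * D ^ t <= #|Good A (B :|: T)| * D.+1 ^ t.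
Proof.
move=> HC; elim=> [|t IH] B T HT HBE Hdis Hn.
  by move/eqP: HT; rewrite cards_eq0 => /eqP ->; rewrite setU0.
have : (0 < #|T|) by rewrite HT.
case/card_gt0P => x xT.
set T' := T :\ x.
have HT' : #|T'| = t by move: HT; rewrite (cardsD1 x T) xT add1n => -[].
have eT : T = x |: T' by rewrite setD1K.
have HBE' : B :|: T' \subset E.
  by apply: subset_trans HBE; apply: setUS; apply: subsetDl.
have Hdis' : [disjoint B & T'].
  by apply: disjointWr Hdis; apply: subsetDl.
have IH1 := IH B T' HT' HBE' Hdis'.
have Hn' : #|B| + #|T'| <= n by apply: leq_trans Hn; rewrite HT HT' addnS.
have {IH1} IH1 := IH1 Hn'.
have xE : x \in E by apply: (subsetP HBE); rewrite inE xT orbT.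
have xnB : x \notin B by rewrite (disjointFl Hdis xT).
have xnS : x \notin B :|: T' by rewrite !inE negb_or xnB eqxx.
have Hcs : #|B :|: T'| < n.
  apply: leq_trans Hn; apply: leq_ltn_trans (leq_card_setU _ _) _.
  by rewrite HT HT' addnS.
have HC1 := HC _ _ Hcs HBE' xE xnS.
have eU : B :|: T = x |: (B :|: T') by rewrite eT setUCA.
rewrite eU GoodU1.
set G := Good A (B :|: T') in IH1 HC1 *.
have hG : #|G| = #|G :\: A x| + #|A x :&: G|.
  by rewrite -(cardsID (A x) G) addnC setIC.
have h1 : #|G| * D <= #|G :\: A x| * D.+1.
  move: HC1; rewrite hG.
  move: (#|G :\: A x|) (#|A x :&: G|) => a b h. nia.
have h2 := leq_mul IH1 (leqnn D).
have h3 : #|G| * D.+1 ^ t * D <= #|G :\: A x| * D.+1 * D.+1 ^ t.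
  by rewrite mulnAC; apply: leq_mul.
rewrite !expnS !mulnA (mulnAC _ D).
exact: leq_trans h2 h3.
Qed.

Lemma GoodS (O I : finType) (A : I -> {set O}) (S S' : {set I}) :
  S \subset S' -> Good A S' \subset Good A S.
Proof.
move=> sub; apply/subsetP=> w; rewrite !inE => /forallP H.
apply/forallP=> i; apply/implyP=> iS; have /implyP := H i; apply.
exact: (subsetP sub).
Qed.

Lemma claim_all (O I : finType) (A : I -> {set O}) (E : {set I}) (nbr : I -> I -> bool)
  (D K : nat) :
  (forall i (S : {set I}), i \in E -> S \subset E -> (forall j, j \in S -> ~~ nbr i j) ->
     #|A i :&: Good A S| * K <= #|Good A S|) ->
  (forall i, i \in E -> #|[set j in E | nbr i j]| <= D) ->
  0 < D -> D.+1 ^ D.+1 <= K * D ^ D ->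
  forall n, Claim A E D n.
Proof.
move=> indep nbrD D0 KD; elim=> [|n IH] S i //.
rewrite ltnS => Sn SE iE iS.
set S1 := [set j in S | nbr i j]; set S2 := [set j in S | ~~ nbr i j].
have eS : S = S2 :|: S1.
  by apply/setP=> j; rewrite !inE; case: (j \in S); case: (nbr i j).
have dis : [disjoint S2 & S1].
  by rewrite -setI_eq0; apply/eqP/setP=> j; rewrite !inE; case: (nbr i j); rewrite ?andbF.
have cS : #|S2| + #|S1| = #|S|.
  by rewrite eS cardsU; move: dis; rewrite -setI_eq0 => /eqP ->; rewrite cards0 subn0.
have Hch := chain IH (erefl #|S1|) (B := S2) (T := S1).
rewrite -eS in Hch; have {Hch} Hch := Hch SE dis.
rewrite cS in Hch; have {Hch} Hch := Hch Sn.
have S2E : S2 \subset E.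
  by apply: subset_trans SE; apply/subsetP=> j; rewrite inE => /andP[].
have Hind := indep i S2 iE S2E.
have {Hind} Hind : #|A i :&: Good A S2| * K <= #|Good A S2|.
  by apply: Hind => j; rewrite inE => /andP[].
have Ha : #|A i :&: Good A S| <= #|A i :&: Good A S2|.
  apply: subset_leq_card; apply: setIS; apply: GoodS.
  by rewrite eS subsetUl.
have mD : #|S1| <= D.
  apply: leq_trans (nbrD i iE); apply: subset_leq_card; apply/subsetP=> j.
  rewrite !inE => /andP[jS ->]; by rewrite (subsetP SE).
move: Hch Hind Ha KD.
set m := #|S1|; set g := #|Good A S|; set g2 := #|Good A S2|;
set a := #|A i :&: Good A S|; set a2 := #|A i :&: Good A S2|.
move=> Hch Hind Ha KD.
have pos : 0 < D.+1 ^ m * D ^ (D - m) by rewrite muln_gt0 !expn_gt0 D0.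
rewrite -(leq_pmul2r pos).
have e1 : D ^ D = D ^ m * D ^ (D - m) by rewrite -expnD subnKC.
apply: (@leq_trans (a * D.+1 ^ D.+1)).
  rewrite -mulnA; apply: leq_mul => //.
  have -> : D.+1 ^ D.+1 = D.+1 * (D.+1 ^ m * D.+1 ^ (D - m)).
    by rewrite -expnD subnKC // expnS.
  apply: leq_mul => //; apply: leq_mul => //.
  by case: (D - m) => // e; rewrite leq_exp2r.
apply: (@leq_trans (a2 * K * D ^ D)).
  rewrite -mulnA; apply: leq_mul => //.
apply: (@leq_trans (g2 * D ^ D)); first by apply: leq_mul.
rewrite e1 !mulnA; apply: leq_mul => //.
Qed.

Lemma lll_exists (O I : finType) (A : I -> {set O}) (E : {set I}) (nbr : I -> I -> bool)
  (D K : nat) :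
  (forall i (S : {set I}), i \in E -> S \subset E -> (forall j, j \in S -> ~~ nbr i j) ->
     #|A i :&: Good A S| * K <= #|Good A S|) ->
  (forall i, i \in E -> #|[set j in E | nbr i j]| <= D) ->
  0 < D -> D.+1 ^ D.+1 <= K * D ^ D -> 0 < #|O| ->
  exists w, w \in Good A E.
Proof.
move=> indep nbrD D0 KD O0.
have HC : Claim A E D #|E| by apply: (claim_all indep nbrD D0 KD).
have := chain HC (erefl #|E|) (B := set0) (T := E).
rewrite set0U Good0 cardsT cards0 add0n => /(_ (subxx _) _ (leqnn _)) h.
have {}h := h ltac:(by rewrite -setI_eq0 set0I).
have : 0 < #|Good A E| * D.+1 ^ #|E|.
  by apply: leq_trans h; rewrite muln_gt0 O0 expn_gt0 D0.
rewrite muln_gt0 => /andP[/card_gt0P [w wG] _]; by exists w.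
Qed.
Definition mono (V : finType) (k : nat) (f : {ffun V -> 'I_k}) (e : {set V}) :=
  [forall x in e, forall y in e, f x == f y].

Definition Mono (V : finType) (k : nat) (e : {set V}) : {set {ffun V -> 'I_k}} :=
  [set f | mono f e].

Lemma mono_eq (V : finType) (k : nat) (f g : {ffun V -> 'I_k}) (e : {set V}) :
  {in e, f =1 g} -> mono f e = mono g e.
Proof.
move=> H; apply/forallP/forallP => H1 x; apply/implyP=> xe; apply/forallP=> y;
 apply/implyP=> ye; have /implyP /(_ xe) /forallP /(_ y) /implyP /(_ ye) := H1 x.
  by rewrite -(H x xe) -(H y ye).
by rewrite (H x xe) (H y ye).
Qed.

Lemma indep_edge (V : finType) (k : nat) (e : {set V}) (v0 : V) (S : {set {set V}}) :
  0 < k -> v0 \in e -> (forall j, j \in S -> [disjoint e & j]) ->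
  #|Mono k e :&: Good (@Mono V k) S| * k ^ (#|e| - 1) <= #|Good (@Mono V k) S|.
Proof.
move=> k0 v0e Hdis.
set c0 : 'I_k := Ordinal k0.
set e' := e :\ v0.
set W := [set w : {ffun V -> 'I_k} | w \in pffun_on c0 e' predT].
have cW : #|W| = k ^ (#|e| - 1).
  rewrite cardsE card_pffun_on card_ord (cardsD1 v0 e) v0e.
  by rewrite add1n subn1.
set M := Mono k e :&: Good (@Mono V k) S.
pose phi (p : {ffun V -> 'I_k} * {ffun V -> 'I_k}) : {ffun V -> 'I_k} :=
  [ffun x => if x \in e' then p.2 x else p.1 x].
rewrite -cW -cardsX -(card_in_imset (f := phi)).
  apply: subset_leq_card; apply/subsetP=> _ /imsetP[[g w] /setXP[gM wW] ->].
  move: gM; rewrite !inE => /andP[_ /forallP gG].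
  apply/forallP=> j; apply/implyP=> jS; have /implyP /(_ jS) := gG j.
  rewrite !inE; congr (~~ _); apply: mono_eq => x xj /=.
  rewrite ffunE /= /e' !inE.
  by rewrite (disjointFl (Hdis j jS) xj) andbF.
move=> [g1 w1] [g2 w2] /setXP[g1M w1W] /setXP[g2M w2W] /= Heq.
have He x : phi (g1, w1) x = phi (g2, w2) x by rewrite Heq.
have Hw x : w1 x = w2 x.
  have := He x; rewrite !ffunE /=; case: ifP => xe' // _.
  move: w1W w2W; rewrite !inE => /pffun_onP[s1 _] /pffun_onP[s2 _].
  have h1 : w1 x = c0.
    by apply/eqP; apply: contraFT xe' => hx; apply: (subsetP s1); rewrite inE.
  have h2 : w2 x = c0.
    by apply/eqP; apply: contraFT xe' => hx; apply: (subsetP s2); rewrite inE.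
  by rewrite h1 h2.
have v0e' : v0 \notin e' by rewrite !inE eqxx.
have Hv0 : g1 v0 = g2 v0.
  by have := He v0; rewrite !ffunE /= (negbTE v0e').
have Hg x : g1 x = g2 x.
  have := He x; rewrite !ffunE /=; case: ifP => xe' // _.
  have xe : x \in e by move: xe'; rewrite !inE => /andP[].
  move: g1M g2M; rewrite !inE => /andP[m1 _] /andP[m2 _].
  move: m1 => /forallP /(_ x) /implyP /(_ xe) /forallP /(_ v0) /implyP /(_ v0e) /eqP ->.
  by move: m2 => /forallP /(_ x) /implyP /(_ xe) /forallP /(_ v0) /implyP /(_ v0e) /eqP ->.
by congr pair; apply/ffunP.
Qed.


Lemma nbr_bound (V : finType) (E : {set {set V}}) (e : {set V}) (dm : nat) :
  (forall v, degree E v <= dm) ->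
  #|[set j in E | ~~ [disjoint e & j]]| <= #|e| * dm.
Proof.
move=> Hd.
apply: (@leq_trans #|\bigcup_(v in e) [set j in E | v \in j]|).
  apply: subset_leq_card; apply/subsetP=> j; rewrite !inE => /andP[jE].
  case/existsP=> v /andP[ve vj].
  by apply/bigcupP; exists v => //; rewrite inE jE.
apply: (@leq_trans (\sum_(v in e) #|[set j in E | v \in j]|)).
  apply: (big_ind2 (fun (U : {set {set V}}) n => #|U| <= n)) => //.
    by rewrite cards0.
  move=> U1 n1 U2 n2 h1 h2; apply: leq_trans (leq_card_setU _ _) _.
  exact: leq_add.
rewrite -sum_nat_const; apply: leq_sum => v _; exact: Hd.
Qed.

Lemma color_ok (V : finType) (k : nat) (f : {ffun V -> 'I_k}) (e : {set V}) :
  ~~ mono f e -> k < #|e| -> 1 < ncolors (fun x => nat_of_ord (f x)) e < #|e|.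
Proof.
move=> nm ke; apply/andP; split.
  move: nm; rewrite negb_forall => /existsP[x]; rewrite negb_imply => /andP[xe].
  rewrite negb_forall => /existsP[y]; rewrite negb_imply => /andP[ye nxy].
  have : uniq [:: nat_of_ord (f x); nat_of_ord (f y)].
    by rewrite /= inE andbT.
  move/uniq_leq_size => /(_ (undup [seq nat_of_ord (f z) | z <- enum e])) h.
  apply: h => z; rewrite !inE => /orP[] /eqP ->; rewrite mem_undup; apply/mapP.
  - by exists x; rewrite ?mem_enum.
  - by exists y; rewrite ?mem_enum.
apply: leq_ltn_trans ke.
have := uniq_leq_size (undup_uniq [seq nat_of_ord (f z) | z <- enum e]) (s2 := iota 0 k).
rewrite size_iota; apply => z; rewrite mem_undup => /mapP[x _ ->].
by rewrite mem_iota add0n ltn_ord.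
Qed.

Theorem mainTheorem5 (V : finType) (E : {set {set V}}) (r : nat) :
  3 <= r ->
  bihypergraph E ->
  uniform E r ->
  (forall v : V,
     (INR (degree E v) <= ((INR (r - 1)) ^ (r - 1) * exp (-1) - 2) / INR r)%R) ->
  colorable E.
Proof.
move=> r3 _ Hu Hdeg.
have [E0|[e0 e0E]] := set_0Vmem E.
  by exists (fun _ => 0%N) => e; rewrite E0 inE.
have : (0 < #|e0|)%N by rewrite (Hu _ e0E); apply: leq_trans r3.
case/card_gt0P=> v0 _.
set vm := [arg max_(v > v0) degree E v].
have Hmax : forall v, (degree E v <= degree E vm)%N.
  by rewrite /vm; case: arg_maxnP => // i _ H v; apply: H.
set dm := degree E vm.
set k := (r - 1)%N.
set D := (r * dm).+1.
set K := expn k k.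
have k0 : (0 < k)%N by rewrite /k subn_gt0; apply: leq_trans r3.
have KD : (expn D.+1 D.+1 <= K * expn D D)%N.
  apply: key_real => //.
  have Hr : (0 < INR r)%R by apply: lt_0_INR; apply/ltP; apply: leq_trans r3.
  have h := Hdeg vm.
  have h2 : (INR r * INR dm + 2 <= INR k ^ k * exp (-1))%R.
    have h' := Rmult_le_compat_l _ _ _ (Rlt_le _ _ Hr) h.
    have eq : (INR r * ((INR k ^ k * exp (-1) - 2) / INR r) = INR k ^ k * exp (-1) - 2)%R.
      field; lra.
    rewrite eq -/dm in h'; lra.
  have -> : INR (r * dm).+2 = (INR r * INR dm + 2)%R.
    rewrite !S_INR mulnE mult_INR; ring.
  have -> : INR K = (INR k ^ k)%R by rewrite /K expn_pow pow_INR.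
  have e1 : (exp 1 * exp (-1) = 1)%R by rewrite -exp_plus Rplus_opp_r exp_0.
  have ep : (0 < exp 1)%R by apply: exp_pos.
  have := Rmult_le_compat_l _ _ _ (Rlt_le _ _ ep) h2.
  rewrite (Rmult_comm (INR k ^ k)) -Rmult_assoc e1 Rmult_1_l //.
have Hm : forall v, (degree E v <= dm)%N by move=> v; apply: Hmax.
have [w wG] : exists w, w \in Good (@Mono V k) E.
  apply: (@lll_exists _ _ (@Mono V k) E (fun e j => ~~ [disjoint e & j]) D K) => //.
  - move=> i S iE SE Hdis.
    have : (0 < #|i|)%N by rewrite (Hu _ iE); apply: leq_trans r3.
    case/card_gt0P=> v vi.
    have := @indep_edge V k i v S k0 vi.
    rewrite (Hu _ iE) -/k; apply=> j jS; by have := Hdis j jS; rewrite negbK.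
  - move=> i iE; apply: leq_trans (nbr_bound _ Hm) _.
    by rewrite (Hu _ iE) /D.
  - apply/card_gt0P; by exists [ffun _ => Ordinal k0].
exists (fun x => nat_of_ord (w x)) => e eE.
apply: color_ok; last by rewrite (Hu _ eE) /k subn1 prednK //; apply: leq_trans r3.
move: wG; rewrite inE => /forallP /(_ e) /implyP /(_ eE).
by rewrite inE.
Qed.
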